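(* For every $k\in\omega$ and $\xi<\omega_1$, the sets $\mathcal{D}(k)=\{p\in\mathbb{P}: n^p\ge k\text{ and }k\in s^p\}$ and $\mathcal{E}(\xi)=\{p\in\mathbb{P}:\xi\in v^p\}$ are dense in the forcing notion $\mathbb{P}$ defined below.
   Context: For $n\in\omega$, $2^n$ is the set of $0$-$1$ sequences of length $n$, with metric $d(\eta,\eta')=2^{-k}$ for $\eta\ne\eta'$, where $k$ is least with $\eta\restriction k\neq\eta'\restriction k$. Let $\mathbb{L}_1(n)$ be the set of all $1$-Lipschitz functions $g\colon 2^n\to 2^n$. For a set $A$, $[A]^2$ denotes the set of $2$-element subsets of $A$, and $[A]^{<\omega}$ the finite subsets; $\rho(\alpha,\beta)$ means $\rho(\{\alpha,\beta\})$. A condition $p\in\mathbb{P}$ is a tuple $p=(n^p,s^p,v^p,\mathcal{F}^p,\gamma^p,\rho^p)$ such that: (1) $n^p\in\omega$, $s^p\in[\omega]^{<\omega}$, $v^p\in[\omega_1]^{<\omega}$; (2) $\mathcal{F}^p=\{f^p_i: i\in s^p\}\subseteq\mathbb{L}_1(n^p)$ and $\rho^p\colon[v^p]^2\to s^p$; (2') $\rho^p(\alpha,\beta)\neq\rho^p(\alpha',\beta)$ whenever $\alpha<\alpha'<\beta$; (3) $\gamma^p\colon v^p\to 2^{n^p}$ is one-to-one; (4) $\gamma^p(\alpha)=f^p_{\rho^p(\alpha,\beta)}(\gamma^p(\beta))$ whenever $\alpha<\beta$ are in $v^p$. The order: $p\le q$ ($q$ is stronger) iff (5) $n^p\le n^q$,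 $s^p\subseteq s^q$, $v^p\subseteq v^q$; (6) $f^q_i(\eta)\restriction n^p=f^p_i(\eta\restriction n^p)$ for each $i\in s^p$ and every $\eta\in 2^{n^q}$; (7) $\gamma^q(\alpha)\restriction n^p=\gamma^p(\alpha)$ for every $\alpha\in v^p$; (8) $\rho^q\restriction[v^p]^2=\rho^p$. A set $D\subseteq\mathbb{P}$ is dense if for every $p\in\mathbb{P}$ there is $q\in D$ with $p\le q$. *)

(* Defs.v *)
From HB Require Import structures.
From mathcomp Require Import all_boot all_order all_algebra.
From mathcomp Require Import finmap.
Set Implicit Arguments. Unset Strict Implicit. Unset Printing Implicit Defensive.
Import Order.TTheory GRing.Theory Num.Theory.
Local Open Scope fset_scope.
Local Open Scope order_scope.

Definition seq2 (n : nat) := n.-tuple bool.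

(* eta |` m : restriction to the first m coordinates (used only for m <= n) *)
Definition restr (n m : nat) (x : seq2 n) : seq2 m :=
  [tuple nth false x i | i < m].

Definition first_diff (n : nat) (x y : seq2 n) : nat :=
  find (fun k => take k x != take k y) (iota 0 n.+1).

Definition dist2 (n : nat) (x y : seq2 n) : rat :=
  if x == y then 0%R else (((2%:R : rat) ^+ first_diff x y)^-1)%R.

Definition lip1 (n : nat) (g : seq2 n -> seq2 n) : Prop :=
  forall x y : seq2 n, (dist2 (g x) (g y) <= dist2 x y)%R.

(* A (pre)condition; f i is relevant only for i in s, gam only on v,
   rho a b only for a < b in v  (rho a b stands for rho({a,b})). *)
Record pcond (d : Order.disp_t) (T : orderType d) := PCond {
  cn : nat;
  cs : {fset nat};
  cv : {fset T};
  cf : nat -> seq2 cn -> seq2 cn;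
  cgam : T -> seq2 cn;
  crho : T -> T -> nat }.
Arguments cf {d T} p _ _.
Arguments cgam {d T} p _.
Arguments crho {d T} p _ _.

Section Forcing.
Context {d : Order.disp_t} {T : orderType d}.

Definition is_cond (p : pcond T) : Prop :=
  (forall i, i \in cs p -> lip1 (cf p i)) /\
  (forall a b, a \in cv p -> b \in cv p -> a < b -> crho p a b \in cs p) /\
  (* (2') *)
  (forall a a' b, a \in cv p -> a' \in cv p -> b \in cv p ->
     a < a' -> a' < b -> crho p a b <> crho p a' b) /\
  (forall a b, a \in cv p -> b \in cv p -> cgam p a = cgam p b -> a = b) /\
  (* (4) *)
  (forall a b, a \in cv p -> b \in cv p -> a < b ->
     cgam p a = cf p (crho p a b) (cgam p b)).

(* p <= q : q is stronger *)
Definition cle (p q : pcond T) : Prop :=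
  (cn p <= cn q)%N /\ cs p `<=` cs q /\ cv p `<=` cv q /\
  (forall i, i \in cs p -> forall eta : seq2 (cn q),
     restr (cn p) (cf q i eta) = cf p i (restr (cn p) eta)) /\
  (forall a, a \in cv p -> restr (cn p) (cgam q a) = cgam p a) /\
  (forall a b, a \in cv p -> b \in cv p -> a < b -> crho q a b = crho p a b).

Definition dense (D : pcond T -> Prop) : Prop :=
  forall p, is_cond p -> exists2 q, is_cond q & cle p q /\ D q.

Definition Dk (k : nat) (p : pcond T) : Prop := (k <= cn p)%N /\ k \in cs p.
Definition Exi (xi : T) (p : pcond T) : Prop := xi \in cv p.

End Forcing.

Definition omega1_like (d : Order.disp_t) (T : orderType d) : Prop :=
  well_founded (fun x y : T => (x < y)%O) /\
  ~ (exists f : T -> nat, injective f) /\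
  (forall x : T, exists f : T -> nat, {in [pred y | (y < x)%O], injective f}).

(* Main.v *)
Require Import Defs.
From mathcomp Require Import all_boot all_order all_algebra.
From mathcomp Require Import finmap.
From mathcomp Require Import zify.
Import Order.TTheory GRing.Theory Num.Theory.
Set Implicit Arguments. Unset Strict Implicit.

Definition agreeN (n j : nat) (x y : seq2 n) : Prop :=
  forall i, (i < j)%N -> nth false x i = nth false y i.

Definition PP (n : nat) (g : seq2 n -> seq2 n) : Prop :=
  forall j x y, agreeN j x y -> agreeN j (g x) (g y).

Lemma take_agree n (x y : seq2 n) j : take j x = take j y -> agreeN j x y.
Proof.
move=> H i Hi; case: (ltnP i n) => Hin.
  by have := congr1 (fun s => nth false s i) H; rewrite !nth_take.
by rewrite !nth_default ?size_tuple.
Qed.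

Lemma agree_take n (x y : seq2 n) j : agreeN j x y -> take j x = take j y.
Proof.
move=> H; apply: (@eq_from_nth _ false); first by rewrite !size_take !size_tuple.
move=> i; rewrite size_take size_tuple => Hi.
have Hij : (i < j)%N by move: Hi; case: ifP => // /negbT; rewrite -leqNgt; lia.
by rewrite !nth_take // H.
Qed.

Lemma agreeW n (x y : seq2 n) i j : (i <= j)%N -> agreeN j x y -> agreeN i x y.
Proof. by move=> Hij H k Hk; apply: H; lia. Qed.

Lemma F3 n (x y : seq2 n) i : (i < first_diff x y)%N -> agreeN i x y.
Proof.
move=> Hi; apply: take_agree.
have Hs : (i < n.+1)%N.
  by apply: leq_trans Hi _; rewrite /first_diff -[X in (_ <= X)%N](size_iota 0 n.+1) find_size.
have := before_find 0 Hi; rewrite nth_iota // add0n.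
by move/negbFE/eqP.
Qed.

Lemma F2 n (x y : seq2 n) : x <> y -> ~ agreeN (first_diff x y) x y.
Proof.
move=> Hxy H; have := agree_take H.
have Hh : has (fun k => take k x != take k y) (iota 0 n.+1).
  apply/hasP; exists n; first by rewrite mem_iota; lia.
  rewrite !take_oversize ?size_tuple //; apply/eqP => E; apply: Hxy; exact: val_inj.
have := nth_find 0 Hh; rewrite /first_diff nth_iota ?add0n; last by have := Hh; rewrite has_find size_iota.
by move/eqP.
Qed.

Lemma F1 n (x y : seq2 n) j : x <> y -> agreeN j x y -> (j < first_diff x y)%N.
Proof.
move=> Hxy H; rewrite ltnNge; apply/negP => Hle.
by apply: (F2 Hxy); apply: agreeW H.
Qed.

Lemma inv_le (a b : nat) :
  (((2%:R : rat) ^+ a)^-1 <= ((2%:R : rat) ^+ b)^-1)%R = (b <= a)%N.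
Proof.
rewrite lef_pV2 ?posrE ?exprn_gt0 // ler_eXn2l //.
Qed.

Lemma PP_lip n (g : seq2 n -> seq2 n) : PP g -> lip1 g.
Proof.
move=> HP x y; rewrite /dist2.
case: (eqVneq x y) => [->|Hxy]; first by rewrite eqxx.
case: (eqVneq (g x) (g y)) => [_|Hg]; first by rewrite invr_ge0 exprn_ge0.
rewrite inv_le leqNgt; apply/negP => Hlt.
apply: (F2 (elimN eqP Hg)); apply: HP; exact: F3.
Qed.

Lemma lip_PP n (g : seq2 n -> seq2 n) : lip1 g -> PP g.
Proof.
move=> HL j x y Hag i Hi; apply/eqP/negPn/negP => Hne.
have Hg : g x <> g y by move=> E; move: Hne; rewrite E eqxx.
have Hxy : x <> y by move=> E; apply: Hg; rewrite E.
have H1 := F1 Hxy Hag.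
have H2 : (first_diff (g x) (g y) <= i.+1)%N.
  rewrite leqNgt; apply/negP => H; move/F3: H => /(_ i (ltnSn i)) E.
  by move: Hne; rewrite E eqxx.
have := HL x y; rewrite /dist2.
rewrite (introF eqP Hxy) (introF eqP Hg) inv_le; lia.
Qed.

Lemma nth_restr n m (x : seq2 n) i :
  nth false (restr m x) i = if (i < m)%N then nth false x i else false.
Proof.
case: ltnP => Hi.
  by rewrite /restr (nth_map (Ordinal Hi)) ?size_enum_ord // nth_enum_ord.
by rewrite nth_default // size_tuple.
Qed.

Lemma restr_restr n m k (x : seq2 n) : (k <= m)%N ->
  restr k (restr m x) = restr k x.
Proof.
move=> Hk; apply: val_inj; apply: (@eq_from_nth _ false); first by rewrite !size_tuple.
move=> i; rewrite size_tuple => Hi; rewrite !nth_restr Hi.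
by have -> : (i < m)%N by lia.
Qed.

Lemma restr_id n (x : seq2 n) : restr n x = x.
Proof.
apply: val_inj; apply: (@eq_from_nth _ false); first by rewrite !size_tuple.
by move=> i; rewrite size_tuple => Hi; rewrite nth_restr Hi.
Qed.

Lemma restr_agree n m (x y : seq2 n) j : agreeN j x y -> agreeN j (restr m x) (restr m y).
Proof. by move=> H i Hi; rewrite !nth_restr H. Qed.

Lemma pad_lip n N (f : seq2 n -> seq2 n) : lip1 f ->
  lip1 (fun eta : seq2 N => restr N (f (restr n eta))).
Proof.
move=> /lip_PP Hf; apply: PP_lip => j x y H.
by apply: restr_agree; apply: Hf; apply: restr_agree.
Qed.

Lemma const_lip n (c : seq2 n) : lip1 (fun _ => c).
Proof. by apply: PP_lip => j x y H. Qed.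

Lemma id_lip n : lip1 (fun x : seq2 n => x).
Proof. by apply: PP_lip. Qed.

Local Open Scope fset_scope.

Section Forc.
Context {d : Order.disp_t} {T : orderType d}.

Lemma cle_refl (p : pcond T) : cle p p.
Proof.
split=> //; split; first exact: fsubset_refl.
split; first exact: fsubset_refl.
split; first by move=> i _ eta; rewrite !restr_id.
split=> //; by move=> a _; rewrite restr_id.
Qed.

Definition extD (p : pcond T) (k : nat) : pcond T :=
  @PCond d T (cn p + k) (cs p `|` [fset k]) (cv p)
   (fun i eta => if i \in cs p then restr (cn p + k) (cf p i (restr (cn p) eta)) else eta)
   (fun a => restr (cn p + k) (cgam p a)) (crho p).

Lemma extD_ok (p : pcond T) k : is_cond p -> is_cond (extD p k) /\ cle p (extD p k) /\ Dk k (extD p k).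
Proof.
move=> [Hl [Hr [H2 [Hinj H4]]]].
have HN : (cn p <= cn p + k)%N by apply: leq_addr.
split.
  rewrite /is_cond; split.
    move=> i _ /=; case Hi: (i \in cs p); [exact: pad_lip (Hl i Hi) | exact: id_lip].
  split.
    by move=> a b Ha Hb Hab /=; rewrite in_fsetU (Hr a b Ha Hb Hab).
  split; first exact: H2.
  split.
    move=> a b Ha Hb /= E; apply: Hinj => //.
    by have := congr1 (restr (cn p)) E; rewrite !restr_restr // !restr_id.
  by move=> a b Ha Hb Hab /=; rewrite (Hr a b Ha Hb Hab) restr_restr // restr_id -H4.
split.
  rewrite /cle; split; first exact: HN.
  split; first exact: fsubsetUl.
  split; first exact: fsubset_refl.
  split; first by move=> i Hi eta /=; rewrite Hi restr_restr // !restr_id.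
  split=> //; by move=> a _ /=; rewrite restr_restr // restr_id.
split; first exact: leq_addl.
by rewrite /= in_fsetU inE eqxx orbT.
Qed.

Lemma nth_ones N i : nth false [tuple true | _ < N] i = (i < N)%N.
Proof.
case: ltnP => Hi.
  by rewrite /= (nth_map (Ordinal Hi)) ?size_enum_ord.
by rewrite nth_default // size_tuple.
Qed.

Section Ext.
Variables (p : pcond T) (xi : T).
Let M := (\max_(i <- enum_fset (cs p)) i).+1.
Let fresh (a : T) := (M + index a (enum_fset (cv p)))%N.
Let N := (cn p + 1)%N.
Let gq (a : T) : seq2 N := if a == xi then [tuple true | _ < N] else restr N (cgam p a).
Let fq (j : nat) (eta : seq2 N) : seq2 N :=
  if j \in cs p then restr N (cf p j (restr (cn p) eta))
  else (let a := nth xi (enum_fset (cv p)) (j - M) in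
        if (a < xi)%O then gq a else gq xi).
Let rq (a b : T) : nat :=
  if b == xi then fresh a else if a == xi then fresh b else crho p a b.

Definition extE : pcond T :=
  @PCond d T N (cs p `|` [fset fresh a | a in cv p]) (xi |` cv p) fq gq rq.

Lemma HM i : i \in cs p -> (i < M)%N.
Proof. by move=> Hi; rewrite ltnS; exact: (@leq_bigmax_seq _ (enum_fset (cs p)) xpredT (fun j => j) i Hi). Qed.

Lemma fresh_not a : fresh a \notin cs p.
Proof. by apply/negP => /HM; rewrite /fresh; lia. Qed.

Lemma fresh_nth a : a \in cv p -> nth xi (enum_fset (cv p)) (fresh a - M) = a.
Proof. by move=> Ha; rewrite /fresh addKn nth_index. Qed.

Lemma fresh_inj a b : a \in cv p -> b \in cv p -> fresh a = fresh b -> a = b.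
Proof. by move=> Ha Hb E; rewrite -(fresh_nth Ha) -(fresh_nth Hb) E. Qed.

Lemma mem1U a : a \in xi |` cv p -> a != xi -> a \in cv p.
Proof. by rewrite !inE => /orP [->|]. Qed.

Lemma extE_ok : is_cond p -> xi \notin cv p -> is_cond extE /\ cle p extE /\ Exi xi extE.
Proof.
move=> [Hl [Hr [H2 [Hinj H4]]]] Hxi.
have HN : (cn p <= N)%N by rewrite /N; apply: leq_addr.
have Hfs a : a \in cv p -> fresh a \in cs p `|` [fset fresh a | a in cv p].
  by move=> Ha; rewrite in_fsetU; apply/orP; right; apply: in_imfset.
have Hne a : a \in cv p -> a != xi.
  by move=> Ha; apply/eqP => E; move: Hxi; rewrite -E Ha.
have Hgq a : a \in cv p -> gq a = restr N (cgam p a).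
  by move=> Ha; rewrite /gq (negbTE (Hne a Ha)).
split.
  rewrite /is_cond; split.
    move=> i _ /=; rewrite /fq; case Hi: (i \in cs p);
      [exact: pad_lip (Hl i Hi) | exact: const_lip].
  split.
    move=> a b Ha Hb Hab /=; rewrite /rq.
    case: (eqVneq b xi) => [Eb|Nb].
      apply: Hfs; apply: mem1U Ha _; rewrite -Eb; by rewrite lt_eqF.
    have Hb' := mem1U Hb Nb.
    case: (eqVneq a xi) => [Ea|Na]; first exact: Hfs.
    by rewrite in_fsetU (Hr a b (mem1U Ha Na) Hb' Hab).
  split.
    move=> a a' b Ha Ha' Hb Haa' Ha'b /=; rewrite /rq.
    case: (eqVneq b xi) => [Eb|Nb].
      have Na : a != xi by rewrite -Eb lt_eqF // (lt_trans Haa').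
      have Na' : a' != xi by rewrite -Eb lt_eqF.
      move=> /(fresh_inj (mem1U Ha Na) (mem1U Ha' Na')) E.
      by move: Haa'; rewrite E ltxx.
    have Hb' := mem1U Hb Nb.
    case: (eqVneq a xi) => [Ea|Na].
      have Na' : a' != xi by rewrite -Ea gt_eqF.
      rewrite (negbTE Na') => E.
      have := Hr a' b (mem1U Ha' Na') Hb' Ha'b; rewrite -E.
      by move: (fresh_not b) => /negbTE ->.
    case: (eqVneq a' xi) => [Ea'|Na'].
      move=> E.
      have := Hr a b (mem1U Ha Na) Hb' (lt_trans Haa' Ha'b); rewrite E.
      by move: (fresh_not b) => /negbTE ->.
    exact: H2 (mem1U Ha Na) (mem1U Ha' Na') Hb' Haa' Ha'b.
  split.
    have Hdis c : c \in cv p -> [tuple true | _ < N] <> restr N (cgam p c).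
      move=> _ E; have := congr1 (fun t : seq2 N => nth false t (cn p)) E.
      by rewrite /= nth_ones nth_restr /N addn1 ltnSn nth_default ?size_tuple.
    move=> a b Ha Hb /=; rewrite /gq.
    case: (eqVneq a xi) => [->|Na]; case: (eqVneq b xi) => [->|Nb] //.
    - by move=> E; case: (Hdis b (mem1U Hb Nb)).
    - by move=> E; case: (Hdis a (mem1U Ha Na)).
    move=> E; apply: Hinj; [exact: mem1U Ha Na | exact: mem1U Hb Nb |].
    by have := congr1 (restr (cn p)) E; rewrite !restr_restr // !restr_id.
  move=> a b Ha Hb Hab /=; rewrite /rq.
  case: (eqVneq b xi) => [Eb|Nb].
    have Na : a != xi by rewrite -Eb lt_eqF.
    have Ha' := mem1U Ha Na.
    rewrite /fq (negbTE (fresh_not a)) fresh_nth // -Eb Hab.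
    by [].
  have Hb' := mem1U Hb Nb.
  case: (eqVneq a xi) => [Ea|Na].
    rewrite /fq (negbTE (fresh_not b)) fresh_nth // -Ea.
    by rewrite (lt_gtF Hab).
  have Ha' := mem1U Ha Na.
  rewrite /fq (Hr a b Ha' Hb' Hab) !Hgq // restr_restr // restr_id -H4 //.
split.
  rewrite /cle; split; first exact: HN.
  split; first exact: fsubsetUl.
  split; first by apply/fsubsetP => x Hx; rewrite !inE Hx orbT.
  split; first by move=> i Hi eta /=; rewrite /fq Hi restr_restr // !restr_id.
  split; first by move=> a Ha /=; rewrite Hgq // restr_restr // restr_id.
  move=> a b Ha Hb Hab /=; rewrite /rq.
  by rewrite (negbTE (Hne b Hb)) (negbTE (Hne a Ha)).
by rewrite /Exi /= !inE eqxx.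
Qed.

End Ext.

End Forc.

Theorem lemma3p3 (d : Order.disp_t) (T : orderType d) (HT : omega1_like T) :
  (forall k : nat, dense (@Dk d T k)) /\ (forall xi : T, dense (@Exi d T xi)).
Proof.
split.
  move=> k p Hp; have [H1 [H2 H3]] := extD_ok k Hp.
  by exists (extD p k).
move=> xi p Hp; case: (boolP (xi \in cv p)) => Hxi.
  by exists p => //; split; [exact: cle_refl | exact: Hxi].
have [H1 [H2 H3]] := extE_ok Hp Hxi.
by exists (extE p xi).
Qed.
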